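(* Let $\gamma$ be Euler's constant, and define $a_1=1/2$ and, for $j\ge2$, $a_j=\dfrac{\nu(j-1)}{2j(2j-1)(2j-2)}$. Then for every integer $N\ge2$, $$\gamma-\sum_{j=1}^N a_j<\frac{2+\nu(N-1)+1/(N-1)}{16(N-1)^2}.$$
   Context: $\gamma=\lim_{n\to\infty}\left(-\ln n+\sum_{i=1}^n 1/i\right)$ is Euler's constant. For a positive integer $t$, $\nu(t)$ denotes the number of digits in the binary expansion of $t$, i.e. $\nu(t)=\lfloor\log_2 t\rfloor+1$. *)

(* Defs.v *)
From Stdlib Require Import Reals Lra Lia Arith.
Open Scope R_scope.

Fixpoint harmonic (n : nat) : R :=
  match n with
  | O => 0
  | S m => harmonic m + / INR (S m)
  end.

Definition euler_seq (n : nat) : R := harmonic n - ln (INR n).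

Definition is_euler_gamma (g : R) : Prop := Un_cv euler_seq g.

(* nu t = number of binary digits of t (t >= 1) = floor(log2 t) + 1 *)
Definition nu (t : nat) : nat := (Nat.log2 t + 1)%nat.

Definition a (j : nat) : R :=
  match j with
  | O => 0 (* unused *)
  | S O => / 2
  | _ => INR (nu (j - 1)) / (2 * INR j * (2 * INR j - 1) * (2 * INR j - 2))
  end.

Fixpoint sum_a (N : nat) : R :=
  match N with
  | O => 0
  | S m => sum_a m + a (S m)
  end.

(* Main.v *)
Require Import Defs.
From Stdlib Require Import Reals Lra Lia.
Open Scope R_scope.

Definition T (m : nat) : R := / (4 * INR m) + harmonic (2 * m) - harmonic m - ln 2.
Definition fb (m : nat) : R := / (16 * INR m * (INR m - 1)).

Lemma T_E m : (1 <= m)%nat -> T m = / (4 * INR m) + euler_seq (2 * m) - euler_seq m.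
Proof.
  intros Hm. unfold T, euler_seq. rewrite mult_INR.
  assert (0 < INR m) by (apply lt_0_INR; lia).
  simpl (INR 2). rewrite ln_mult by lra. replace (1+1) with 2 by ring. lra.
Qed.

Lemma harmonic_S n : harmonic (S n) = harmonic n + / INR (S n).
Proof. reflexivity. Qed.

Lemma T_step m : (1 <= m)%nat ->
  T m - T (S m) = / (2 * INR (S m) * (2 * INR (S m) - 1) * (2 * INR (S m) - 2)).
Proof.
  intros Hm. unfold T.
  replace (2 * S m)%nat with (S (S (2 * m))) by lia. rewrite !harmonic_S.
  rewrite !S_INR, !mult_INR. simpl (INR 2).
  assert (1 <= INR m) by (apply (le_INR 1); lia).
  field. repeat split; lra.
Qed.

Lemma a_T i : a (S (S i)) = INR (nu (S i)) * (T (S i) - T (S (S i))).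
Proof.
  rewrite T_step by lia. unfold a.
  replace (S (S i) - 1)%nat with (S i) by lia. unfold Rdiv. reflexivity.
Qed.

Fixpoint Gk (K : nat) : R :=
  match K with
  | O => T 1
  | S K' => Gk K' + T (2 ^ S K')
  end.

Lemma Gk_S k : Gk (S k) = Gk k + T (2 ^ S k).
Proof. reflexivity. Qed.

Lemma Gk_closed K : Gk K = euler_seq (2 ^ S K) - / 2 ^ (S (S K)) - / 2.
Proof.
  induction K as [|K IH].
  - simpl Gk. rewrite T_E by lia. unfold euler_seq at 2. simpl harmonic.
    simpl (INR 1). rewrite ln_1. simpl. field.
  - simpl Gk. rewrite IH. rewrite T_E.
    2:{ pose proof (Nat.pow_gt_lin_r 2 (S K) ltac:(lia)). simpl in H. lia. }
    change (2 * 2 ^ S K)%nat with (2 ^ S (S K))%nat.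
    change (2 ^ K + (2 ^ K + 0))%nat with (2 ^ S K)%nat. change (2 * 2 ^ S K)%nat with (2 ^ S (S K))%nat. rewrite pow_INR. replace (INR 2) with 2 by (simpl; ring).
    assert (0 < 2 ^ K) by (apply pow_lt; lra).
    cbn [pow]. field. lra.
Qed.

Lemma nu_S_pow n : Nat.log2 (S n) = S (Nat.log2 n) -> S n = (2 ^ S (Nat.log2 n))%nat.
Proof.
  intros H. destruct (Nat.log2_eq_succ_is_pow2 n H) as [b Hb].
  rewrite Hb in H. rewrite Nat.log2_pow2 in H by lia. rewrite <- H. exact Hb.
Qed.

Lemma abel n : (1 <= n)%nat ->
  sum_a (S n) = / 2 + Gk (Nat.log2 n) - INR (nu n) * T (S n).
Proof.
  induction n as [|n IH]; intros Hn; [lia|].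
  destruct n as [|n].
  - change (sum_a 2) with (0 + a 1 + a 2). rewrite a_T. unfold nu. simpl. lra.
  - change (sum_a (S (S (S n)))) with (sum_a (S (S n)) + a (S (S (S n)))).
    rewrite IH by lia. rewrite a_T.
    destruct (Nat.log2_succ_or (S n)) as [H|H].
    + pose proof (nu_S_pow _ H) as HP. rewrite H, Gk_S, <- HP.
      unfold nu. rewrite H. rewrite !plus_INR, !S_INR. simpl (INR 1). ring.
    + rewrite H. unfold nu. rewrite H. ring.
Qed.

Lemma sub_cv u l phi : Un_cv u l -> (forall n, (n <= phi n)%nat) -> Un_cv (fun n => u (phi n)) l.
Proof.
  intros Hu Hphi eps Heps. destruct (Hu eps Heps) as [N HN].
  exists N. intros n Hn. apply HN. specialize (Hphi n). lia.
Qed.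

Lemma lim_le_eps v l B N0 : Un_cv v l -> (forall n, (N0 <= n)%nat -> v n <= B + / 2 ^ n) -> l <= B.
Proof.
  intros Hv Hb. destruct (Rle_or_lt l B) as [H|H]; [exact H|exfalso].
  set (eps := (l - B) / 2).
  assert (Heps : 0 < eps) by (unfold eps; lra).
  destruct (Hv eps Heps) as [N1 HN1].
  destruct (pow_lt_1_zero (/ 2) ltac:(rewrite Rabs_pos_eq; lra) eps Heps) as [N2 HN2].
  set (n := (N0 + N1 + N2)%nat).
  specialize (HN1 n ltac:(unfold n; lia)). specialize (HN2 n ltac:(unfold n; lia)).
  specialize (Hb n ltac:(unfold n; lia)).
  rewrite pow_inv in HN2. unfold R_dist in HN1.
  rewrite Rabs_pos_eq in HN2 by (apply Rlt_le, Rinv_0_lt_compat, pow_lt; lra).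
  apply Rabs_def2 in HN1. unfold eps in *. lra.
Qed.

Lemma step_ineq M : (2 <= M)%nat ->
  / (2 * INR (S M) * (2 * INR (S M) - 1) * (2 * INR (S M) - 2)) <= fb M - fb (S M).
Proof.
  intros HM. unfold fb. rewrite S_INR.
  assert (Hx : 2 <= INR M) by (apply (le_INR 2); lia).
  set (x := INR M) in *.
  assert (E : / (16 * x * (x - 1)) - / (16 * (x + 1) * (x + 1 - 1))
              - / (2 * (x + 1) * (2 * (x + 1) - 1) * (2 * (x + 1) - 2))
              = 3 / (8 * (x - 1) * x * (x + 1) * (2 * x + 1))).
  { field. repeat split; lra. }
  assert (0 < 3 / (8 * (x - 1) * x * (x + 1) * (2 * x + 1))).
  { apply Rdiv_lt_0_compat; [lra|]. repeat apply Rmult_lt_0_compat; lra. }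
  lra.
Qed.

Lemma mono m : (2 <= m)%nat -> forall d, T m - fb m <= T (m + d) - fb (m + d).
Proof.
  intros Hm d. induction d as [|d IH].
  - rewrite Nat.add_0_r. lra.
  - replace (m + S d)%nat with (S (m + d)) by lia.
    pose proof (T_step (m + d) ltac:(lia)).
    pose proof (step_ineq (m + d) ltac:(lia)). lra.
Qed.

Lemma f_nonneg m : (2 <= m)%nat -> 0 <= fb m.
Proof.
  intros Hm. unfold fb. assert (2 <= INR m) by (apply (le_INR 2); lia).
  apply Rlt_le, Rinv_0_lt_compat. repeat apply Rmult_lt_0_compat; lra.
Qed.

Lemma T_le_f g m : is_euler_gamma g -> (2 <= m)%nat -> T m <= fb m.
Proof.
  intros Hg Hm. set (c := T m - fb m).
  assert (Hcv : Un_cv (fun n => euler_seq (2 ^ n) - euler_seq (2 ^ S n)) (g - g)).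
  { apply CV_minus.
    - apply (sub_cv euler_seq g (fun n => 2 ^ n)%nat Hg).
      intros n. pose proof (Nat.pow_gt_lin_r 2 n ltac:(lia)). lia.
    - apply (sub_cv euler_seq g (fun n => 2 ^ S n)%nat Hg).
      intros n. pose proof (Nat.pow_gt_lin_r 2 (S n) ltac:(lia)). lia. }
  assert (c <= 0); [|unfold c in *; lra].
  cut (g - g <= - c); [lra|].
  apply (lim_le_eps _ _ _ m Hcv).
  intros n Hn.
  pose proof (Nat.pow_gt_lin_r 2 n ltac:(lia)) as Hp.
  pose proof (mono m Hm (2 ^ n - m)) as Hmo.
  replace (m + (2 ^ n - m))%nat with (2 ^ n)%nat in Hmo by lia.
  pose proof (f_nonneg (2 ^ n) ltac:(lia)).
  rewrite (T_E (2 ^ n)) in Hmo by lia.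
  change (2 * 2 ^ n)%nat with (2 ^ S n)%nat in Hmo.
  rewrite pow_INR in Hmo. replace (INR 2) with 2 in Hmo by (simpl; ring).
  assert (0 < 2 ^ n) by (apply pow_lt; lra).
  assert (/ (4 * 2 ^ n) <= / 2 ^ n) by (apply Rinv_le_contravar; lra).
  unfold c in *. lra.
Qed.

Lemma geo g K d : is_euler_gamma g ->
  Gk (K + d) - Gk K <= / (12 * 2 ^ S K * (2 ^ S K - 1)) - / (12 * 2 ^ S (K + d) * (2 ^ S (K + d) - 1)).
Proof.
  intros Hg. induction d as [|d IH].
  - rewrite Nat.add_0_r. lra.
  - replace (K + S d)%nat with (S (K + d)) by lia. rewrite Gk_S.
    pose proof (T_le_f g (2 ^ S (K + d)) Hg) as HT.
    assert (H2 : (2 <= 2 ^ S (K + d))%nat).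
    { pose proof (Nat.pow_gt_lin_r 2 (S (K + d)) ltac:(lia)). lia. }
    specialize (HT H2). unfold fb in HT. rewrite pow_INR in HT.
    replace (INR 2) with 2 in HT by (simpl; ring).
    assert (Hy : 2 <= 2 ^ S (K + d)).
    { replace 2 with (2 ^ 1) at 1 by ring. apply Rle_pow; [lra|lia]. }
    set (y := 2 ^ S (K + d)) in *.
    replace (2 ^ S (S (K + d))) with (2 * y) by (unfold y; simpl; ring).
    assert (E : / (12 * y * (y - 1)) - / (12 * (2 * y) * (2 * y - 1)) - / (16 * y * (y - 1))
                = / (48 * y * (y - 1) * (2 * y - 1))).
    { assert (y <> 0) by lra. assert (y - 1 <> 0) by lra. assert (2 * y - 1 <> 0) by lra.
      field. auto. }
    assert (0 < / (48 * y * (y - 1) * (2 * y - 1))).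
    { apply Rinv_0_lt_compat. clearbody y. repeat apply Rmult_lt_0_compat; lra. }
    lra.
Qed.

Theorem proposition1 (g : R) (Hg : is_euler_gamma g) (N : nat) (HN : (2 <= N)%nat) :
  g - sum_a N <
  (2 + INR (nu (N - 1)) + / INR (N - 1)) / (16 * INR (N - 1) ^ 2).
Proof.
  destruct N as [|n]; [lia|].
  replace (S n - 1)%nat with n by lia.
  rewrite abel by lia.
  set (K := Nat.log2 n).
  assert (Hi : g <= euler_seq (2 ^ S K) - / 2 ^ S (S K) + / (12 * 2 ^ S K * (2 ^ S K - 1))).
  { apply (lim_le_eps (fun M => euler_seq (2 ^ S M)) g _ K).
    - apply (sub_cv euler_seq g (fun M => 2 ^ S M)%nat Hg).
      intros M. pose proof (Nat.pow_gt_lin_r 2 (S M) ltac:(lia)). lia.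
    - intros M HM. cbv beta.
      pose proof (Gk_closed M) as H1. pose proof (Gk_closed K) as H2.
      pose proof (geo g K (M - K) Hg) as H3.
      replace (K + (M - K))%nat with M in H3 by lia.
      assert (0 < / (12 * 2 ^ S M * (2 ^ S M - 1))).
      { apply Rinv_0_lt_compat. assert (2 <= 2 ^ S M).
        { replace 2 with (2 ^ 1) at 1 by ring. apply Rle_pow; [lra|lia]. }
        set (z := 2 ^ S M) in *. clearbody z. repeat apply Rmult_lt_0_compat; lra. }
      assert (0 < 2 ^ M) by (apply pow_lt; lra).
      assert (/ 2 ^ S (S M) <= / 2 ^ M).
      { apply Rinv_le_contravar; [lra|]. simpl. lra. }
      lra. }
  pose proof (Gk_closed K) as HG.
  pose proof (T_le_f g (S n) Hg ltac:(lia)) as HT.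
  assert (Hnu : 0 <= INR (nu n)) by apply pos_INR.
  assert (HP : INR (S n) <= 2 ^ S K).
  { replace (2 ^ S K) with (INR (2 ^ S K)) by (rewrite pow_INR; simpl INR; f_equal; ring).
    apply le_INR.
    pose proof (Nat.log2_spec n ltac:(lia)). unfold K. lia. }
  rewrite S_INR in HP.
  unfold fb in HT. rewrite S_INR in HT.
  assert (Hn : 1 <= INR n) by (apply (le_INR 1); lia).
  set (x := INR n) in *. set (P := 2 ^ S K) in *. set (v := INR (nu n)) in *. clearbody x P v.
  assert (Hx2 : 1 <= x ^ 2) by nra.
  assert (h1 : / (12 * P * (P - 1)) <= / (12 * x ^ 2)).
  { apply Rinv_le_contravar; nra. }
  assert (h2 : / (12 * x ^ 2) < 2 / (16 * x ^ 2)).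
  { replace (2 / (16 * x ^ 2)) with (/ (8 * x ^ 2)) by (field; lra).
    apply Rinv_lt_contravar; [apply Rmult_lt_0_compat|]; lra. }
  assert (h3 : v * / (16 * (x + 1) * (x + 1 - 1)) <= v / (16 * x ^ 2)).
  { unfold Rdiv. apply Rmult_le_compat_l; [lra|]. apply Rinv_le_contravar; [lra|]. nra. }
  assert (h4 : 0 < / x / (16 * x ^ 2)).
  { apply Rdiv_lt_0_compat; [apply Rinv_0_lt_compat; lra| nra]. }
  assert (E : (2 + v + / x) / (16 * x ^ 2) = 2 / (16 * x ^ 2) + v / (16 * x ^ 2) + / x / (16 * x ^ 2))
    by (field; lra).
  rewrite E.
  assert (v * T (S n) <= v * / (16 * (x + 1) * (x + 1 - 1))) by (apply Rmult_le_compat_l; lra).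
  lra.
Qed.
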